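(* Let $(X,d_X)$ and $(Y,d_Y)$ be ultrametric spaces and let $d$ be a partial distance-preserving metric on $X\times Y$ such that $d_\infty\le d$ on $(X\times Y)\times(X\times Y)$. Then the following are equivalent: (i) $d$ is an ultrametric on $X\times Y$; (ii) for all compact sets $W\subseteq X$, $Z\subseteq Y$ and every $\varepsilon>0$, $$\mathcal M_\varepsilon(W\times Z)=\mathcal M_\varepsilon(W)\cdot\mathcal M_\varepsilon(Z),$$ where $\mathcal M_\varepsilon(W)$, $\mathcal M_\varepsilon(Z)$, $\mathcal M_\varepsilon(W\times Z)$ are computed in $(X,d_X)$, $(Y,d_Y)$, $(X\times Y,d)$ respectively.
   Context: $d_\infty((x_1,y_1),(x_2,y_2))=\max\{d_X(x_1,x_2),d_Y(y_1,y_2)\}$. A metric $d$ on $X\times Y$ is partial distance-preserving if $d((x_1,y),(x_2,y))=d_X(x_1,x_2)$ and $d((x,y_1),(x,y_2))=d_Y(y_1,y_2)$ for all $x,x_1,x_2\in X$, $y,y_1,y_2\in Y$. A metric $\rho$ is an ultrametric if $\rho(a,b)\le\max\{\rho(a,c),\rho(c,b)\}$. In a metric space $(M,\rho)$, a set $A$ is $\varepsilon$-distinguishable if $\rho(a,b)>\varepsilon$ for distinct $a,b\in A$, and for a totally bounded $V\subseteq M$ the packing number $\mathcal M_\varepsilon(V)$ is the maximal cardinality of an $\varepsilon$-distinguishable subset of $V$ (so $\mathcal M_\varepsilon(\emptyset)=0$). *)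

(* Defs.v *)
From Stdlib Require Import Reals List Classical ClassicalEpsilon.
Open Scope R_scope.

Definition is_metric {A : Type} (d : A -> A -> R) : Prop :=
  (forall a b, 0 <= d a b) /\
  (forall a b, d a b = 0 <-> a = b) /\
  (forall a b, d a b = d b a) /\
  (forall a b c, d a b <= d a c + d c b).

Definition is_ultrametric {A : Type} (d : A -> A -> R) : Prop :=
  is_metric d /\ (forall a b c, d a b <= Rmax (d a c) (d c b)).

Definition d_inf {X Y : Type} (dX : X -> X -> R) (dY : Y -> Y -> R)
  (p q : X * Y) : R := Rmax (dX (fst p) (fst q)) (dY (snd p) (snd q)).

Definition partial_distance_preserving {X Y : Type}
  (dX : X -> X -> R) (dY : Y -> Y -> R) (d : X * Y -> X * Y -> R) : Prop :=
  (forall x1 x2 y, d (x1, y) (x2, y) = dX x1 x2) /\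
  (forall x y1 y2, d (x, y1) (x, y2) = dY y1 y2).

Definition open_set {A : Type} (d : A -> A -> R) (U : A -> Prop) : Prop :=
  forall a, U a -> exists r, 0 < r /\ forall b, d a b < r -> U b.

Definition compact_set {A : Type} (d : A -> A -> R) (K : A -> Prop) : Prop :=
  forall (I : Type) (U : I -> A -> Prop),
    (forall i, open_set d (U i)) ->
    (forall a, K a -> exists i, U i a) ->
    exists l : list I, forall a, K a -> exists i, In i l /\ U i a.

Definition setX {X Y : Type} (W : X -> Prop) (Z : Y -> Prop) : X * Y -> Prop :=
  fun p => W (fst p) /\ Z (snd p).

Definition distinguishable_list {A : Type} (d : A -> A -> R) (V : A -> Prop)
  (eps : R) (l : list A) : Prop :=
  NoDup l /\ (forall a, In a l -> V a) /\
  (forall a b, In a l -> In b l -> a <> b -> eps < d a b).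

Definition is_packing_number {A : Type} (d : A -> A -> R) (V : A -> Prop)
  (eps : R) (n : nat) : Prop :=
  (exists l, distinguishable_list d V eps l /\ length l = n) /\
  (forall l, distinguishable_list d V eps l -> (length l <= n)%nat).

(* The packing number M_eps(V) (well defined, e.g., for totally bounded V;
   for V empty it is 0). *)
Definition packing_number {A : Type} (d : A -> A -> R) (V : A -> Prop)
  (eps : R) : nat :=
  epsilon (inhabits 0%nat) (fun n => is_packing_number d V eps n).

(* Main.v *)
Require Import Defs.
From Stdlib Require Import Reals List Classical ClassicalEpsilon Lra Lia.
Open Scope R_scope.

Lemma NoDup_map_in {A B} (f:A->B) l : NoDup l ->
  (forall u v, In u l -> In v l -> f u = f v -> u = v) -> NoDup (map f l).
Proof.
  induction l as [|a l IH]; simpl; intros Hnd Hinj. constructor.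
  inversion Hnd; subst. constructor.
  - intro Hin. apply in_map_iff in Hin. destruct Hin as [v [Hv Hvin]].
    assert (v = a) by (apply Hinj; auto). subst; contradiction.
  - apply IH; auto.
Qed.

Lemma inj_len {A B} (l : list A) (L : list B) (R : A -> B -> Prop):
 NoDup l -> (forall u, In u l -> exists c, In c L /\ R u c) ->
 (forall u v c, In u l -> In v l -> R u c -> R v c -> u = v) -> (length l <= length L)%nat.
Proof.
 intros Hnd Hex Hinj.
 destruct L as [|b0 L'].
 - destruct l as [|u l']. simpl; lia.
   destruct (Hex u (or_introl eq_refl)) as [c [Hc _]]. destruct Hc.
 - pose (f := fun u => epsilon (inhabits b0) (fun c => In c (b0::L') /\ R u c)).
   assert (Hf : forall u, In u l -> In (f u) (b0::L') /\ R u (f u)).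
   { intros u Hu. unfold f. apply epsilon_spec. apply Hex; auto. }
   rewrite <- (length_map f l).
   apply NoDup_incl_length.
   + apply NoDup_map_in; auto. intros u v Hu Hv E.
     apply (Hinj u v (f u)); auto. apply Hf; auto. rewrite E; apply Hf; auto.
   + intros c Hc. apply in_map_iff in Hc. destruct Hc as [u [<- Hu]]. apply Hf; auto.
Qed.

Lemma NoDup_prod {A B} (l : list A) (l' : list B) :
  NoDup l -> NoDup l' -> NoDup (list_prod l l').
Proof.
  induction l as [|a l IH]; simpl; intros H1 H2. constructor.
  inversion H1; subst. apply NoDup_app.
  - apply NoDup_map_in; auto. intros u v _ _ E. inversion E; auto.
  - apply IH; auto.
  - intros [x y] Hin Hin'. apply in_map_iff in Hin. destruct Hin as [z [E _]].
    inversion E; subst. apply in_prod_iff in Hin'. tauto.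
Qed.

Lemma bounded_max (P : nat -> Prop) B : P 0%nat -> (forall n, P n -> (n <= B)%nat) ->
  exists n, P n /\ forall m, P m -> (m <= n)%nat.
Proof.
  revert P. induction B; intros P H0 HB.
  - exists 0%nat. split; auto.
  - destruct (classic (P (S B))) as [HS|HS].
    + exists (S B); split; auto.
    + apply IHB; auto. intros n Hn. pose proof (HB n Hn).
      destruct (Nat.eq_dec n (S B)); [subst; contradiction| lia].
Qed.

Lemma packing_exists {A} (dA : A -> A -> R) V eps B :
  (forall l, distinguishable_list dA V eps l -> (length l <= B)%nat) ->
  exists n, is_packing_number dA V eps n.
Proof.
  intros HB.
  destruct (bounded_max (fun n => exists l, distinguishable_list dA V eps l /\ length l = n) B)
    as [n [Hn Hmax]].
  - exists nil. split; auto. split. constructor. split; intros; simpl in *; contradiction.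
  - intros n [l [Hl <-]]. auto.
  - exists n. split; auto. intros l Hl. apply Hmax. eauto.
Qed.

Lemma packing_eq {A} (dA : A -> A -> R) V eps n :
  is_packing_number dA V eps n -> packing_number dA V eps = n.
Proof.
  intros Hn. unfold packing_number.
  destruct (epsilon_spec (inhabits 0%nat) (fun n => is_packing_number dA V eps n)
    (ex_intro _ n Hn)) as [[l' [Hl' Hlen']] Hmax'].
  destruct Hn as [[l [Hl Hlen]] Hmax].
  apply Hmax in Hl'. apply Hmax' in Hl. lia.
Qed.

Lemma packing_one {A} (dA : A -> A -> R) (V : A -> Prop) eps a0 : V a0 ->
  (forall a b, V a -> V b -> dA a b <= eps) -> is_packing_number dA V eps 1.
Proof.
  intros Ha0 Hsm. split.
  - exists (a0::nil). split; [|reflexivity]. split.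
    + constructor; [simpl; tauto| constructor].
    + split. intros a [<-|[]]; auto.
      intros a b [<-|[]] [<-|[]] Hne; now exfalso.
  - intros l [Hnd [Hin Hd]]. destruct l as [|a [|b l']]; simpl; try lia. exfalso.
    inversion Hnd; subst. assert (a <> b) by (intro; subst; apply H1; simpl; auto).
    specialize (Hd a b (or_introl eq_refl) (or_intror (or_introl eq_refl)) H).
    specialize (Hsm a b (Hin a (or_introl eq_refl)) (Hin b (or_intror (or_introl eq_refl)))).
    lra.
Qed.

Lemma compact2 {A} (dA : A -> A -> R) (x y : A) : compact_set dA (fun z => z = x \/ z = y).
Proof.
  intros I U _ Hcov. destruct (Hcov x (or_introl eq_refl)) as [i Hi].
  destruct (Hcov y (or_intror eq_refl)) as [j Hj]. exists (i::j::nil).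
  intros a [->| ->]; [exists i|exists j]; simpl; auto.
Qed.

Lemma compact_bound {A} (dA : A -> A -> R) V eps : is_metric dA -> 0 < eps ->
  compact_set dA V -> exists B, forall l, distinguishable_list dA V eps l -> (length l <= B)%nat.
Proof.
  intros Hm He HK.
  destruct Hm as [Hpos [Hz [Hs Ht]]].
  destruct (HK A (fun a b => dA a b < eps/2)) as [L HL].
  - intros a b Hb. exists (eps/2 - dA a b). split. lra. intros c Hc.
    pose proof (Ht a c b). lra.
  - intros a Ha. exists a. rewrite (proj2 (Hz a a) eq_refl). lra.
  - exists (length L). intros l [Hnd [Hin Hd]].
    apply (inj_len l L (fun u c => dA c u < eps/2)); auto.
    intros u v c Hu Hv Hcu Hcv. apply NNPP; intro Hne.
    pose proof (Hd u v Hu Hv Hne). pose proof (Ht u v c). rewrite (Hs u c) in H0. lra.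
Qed.

Lemma near_max {A} (dA: A->A->R) V eps n l : is_metric dA -> 0 < eps ->
  is_packing_number dA V eps n -> distinguishable_list dA V eps l -> length l = n ->
  forall w, V w -> exists a, In a l /\ dA w a <= eps.
Proof.
  intros Hm He [_ Hmax] Hl Hlen w Hw. apply NNPP; intro Hno.
  assert (Hall: forall a, In a l -> eps < dA w a).
  { intros a Ha. apply Rnot_le_lt. intro. apply Hno. eauto. }
  destruct Hm as [_ [Hz [Hs _]]].
  assert (Hd2 : distinguishable_list dA V eps (w::l)).
  { destruct Hl as [Hnd [Hin Hd]]. split; [|split].
    - constructor; auto. intro Hw'. specialize (Hall w Hw').
      rewrite (proj2 (Hz w w) eq_refl) in Hall. lra.
    - intros a [Ha|Ha]; subst; auto.
    - intros a b Ha Hb Hne. destruct Ha as [Ha|Ha]; destruct Hb as [Hb|Hb]; subst.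
      + exfalso; now apply Hne.
      + auto.
      + rewrite Hs; auto.
      + auto. }
  apply Hmax in Hd2. simpl in Hd2. lia.
Qed.

Lemma dinf_ult {X Y} (dX : X -> X -> R) (dY : Y -> Y -> R) :
  (forall a b c, dX a b <= Rmax (dX a c) (dX c b)) ->
  (forall a b c, dY a b <= Rmax (dY a c) (dY c b)) ->
  forall p q r, d_inf dX dY p q <= Rmax (d_inf dX dY p r) (d_inf dX dY r q).
Proof.
  intros HX HY p q r. unfold d_inf. apply Rmax_lub.
  - eapply Rle_trans; [apply (HX _ _ (fst r))|]. apply Rmax_lub.
    + apply Rle_trans with (Rmax (dX (fst p) (fst r)) (dY (snd p) (snd r))); apply Rmax_l.
    + apply Rle_trans with (Rmax (dX (fst r) (fst q)) (dY (snd r) (snd q)));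
        [apply Rmax_l|apply Rmax_r].
  - eapply Rle_trans; [apply (HY _ _ (snd r))|]. apply Rmax_lub.
    + apply Rle_trans with (Rmax (dX (fst p) (fst r)) (dY (snd p) (snd r)));
        [apply Rmax_r|apply Rmax_l].
    + apply Rle_trans with (Rmax (dX (fst r) (fst q)) (dY (snd r) (snd q))); apply Rmax_r.
Qed.

Theorem theorem4p1 (X Y : Type) (dX : X -> X -> R) (dY : Y -> Y -> R)
  (d : X * Y -> X * Y -> R)
  (hX : is_ultrametric dX) (hY : is_ultrametric dY)
  (hd : is_metric d) (hpdp : partial_distance_preserving dX dY d)
  (hinf : forall p q, d_inf dX dY p q <= d p q) :
  is_ultrametric d <->
  (forall (W : X -> Prop) (Z : Y -> Prop), compact_set dX W -> compact_set dY Z ->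
     forall eps, 0 < eps ->
     packing_number d (setX W Z) eps =
       (packing_number dX W eps * packing_number dY Z eps)%nat).
Proof.
  destruct hX as [hXm hXu]. destruct hY as [hYm hYu].
  split.
  - intros [_ Hult] W Z HW HZ eps Heps.
    assert (Heq: forall p q, d p q = d_inf dX dY p q).
    { intros [p1 p2] [q1 q2]. apply Rle_antisym; [|apply hinf].
      destruct hpdp as [h1 h2]. eapply Rle_trans. apply (Hult _ _ (q1,p2)).
      rewrite h1, h2. unfold d_inf; simpl. apply Rle_refl. }
    destruct (compact_bound dX W eps hXm Heps HW) as [BW HBW].
    destruct (compact_bound dY Z eps hYm Heps HZ) as [BZ HBZ].
    destruct (packing_exists dX W eps BW HBW) as [nW HnW].
    destruct (packing_exists dY Z eps BZ HBZ) as [nZ HnZ].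
    rewrite (packing_eq _ _ _ _ HnW), (packing_eq _ _ _ _ HnZ).
    apply packing_eq.
    pose proof HnW as HnW'. pose proof HnZ as HnZ'.
    destruct HnW as [[lW [HlW HlenW]] HmaxW].
    destruct HnZ as [[lZ [HlZ HlenZ]] HmaxZ].
    split.
    + exists (list_prod lW lZ). split.
      * destruct HlW as [HndW [HinW HdW]]. destruct HlZ as [HndZ [HinZ HdZ]].
        split; [|split].
        -- apply NoDup_prod; auto.
        -- intros [a b] Hab. apply in_prod_iff in Hab. split; simpl; [apply HinW|apply HinZ]; tauto.
        -- intros [a1 b1] [a2 b2] H1 H2 Hne. apply in_prod_iff in H1, H2.
           rewrite Heq; unfold d_inf; simpl. destruct (classic (a1 = a2)) as [->|Ha].
           ++ assert (b1 <> b2) by (intro; subst; auto).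
              apply Rlt_le_trans with (dY b1 b2); [apply HdZ; tauto|apply Rmax_r].
           ++ apply Rlt_le_trans with (dX a1 a2); [apply HdW; tauto|apply Rmax_l].
      * rewrite length_prod, HlenW, HlenZ. reflexivity.
    + intros l Hl. rewrite <- HlenW, <- HlenZ, <- length_prod.
      apply (inj_len l (list_prod lW lZ)
        (fun p ab => dX (fst p) (fst ab) <= eps /\ dY (snd p) (snd ab) <= eps)).
      * apply Hl.
      * intros u Hu. destruct Hl as [_ [Hin _]]. destruct (Hin u Hu) as [Hu1 Hu2].
        destruct (near_max dX W eps nW lW hXm Heps HnW' HlW HlenW _ Hu1) as [a [Ha Hda]].
        destruct (near_max dY Z eps nZ lZ hYm Heps HnZ' HlZ HlenZ _ Hu2) as [b [Hb Hdb]].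
        exists (a,b). split. apply in_prod; auto. simpl; auto.
      * intros u v [a b] Hu Hv [Hu1 Hu2] [Hv1 Hv2]. simpl in *.
        apply NNPP; intro Hne. destruct Hl as [_ [_ Hd]].
        specialize (Hd u v Hu Hv Hne). rewrite Heq in Hd. unfold d_inf in Hd.
        destruct hXm as [_ [_ [HsX _]]]. destruct hYm as [_ [_ [HsY _]]].
        assert (dX (fst u) (fst v) <= eps).
        { eapply Rle_trans. apply (hXu _ _ a). apply Rmax_lub; auto. rewrite HsX; auto. }
        assert (dY (snd u) (snd v) <= eps).
        { eapply Rle_trans. apply (hYu _ _ b). apply Rmax_lub; auto. rewrite HsY; auto. }
        assert (Rmax (dX (fst u) (fst v)) (dY (snd u) (snd v)) <= eps) by (apply Rmax_lub; auto).
        lra.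
  - intros H.
    assert (Heq : forall p q, d p q = d_inf dX dY p q).
    { intros [p1 p2] [q1 q2]. apply NNPP; intro Hne.
      pose proof (hinf (p1,p2) (q1,q2)) as Hle.
      assert (Hlt: d_inf dX dY (p1,p2) (q1,q2) < d (p1,p2) (q1,q2)).
      { destruct Hle as [Hlt|Heq']; auto. exfalso; apply Hne; symmetry; auto. }
      assert (HmX : dX p1 q1 <= d_inf dX dY (p1,p2) (q1,q2)) by (unfold d_inf; simpl; apply Rmax_l).
      assert (HmY : dY p2 q2 <= d_inf dX dY (p1,p2) (q1,q2)) by (unfold d_inf; simpl; apply Rmax_r).
      destruct hXm as [HpX [HzX [HsX _]]]. destruct hYm as [HpY [HzY [HsY _]]].
      pose proof (HpX p1 q1).
      set (m := d_inf dX dY (p1,p2) (q1,q2)) in *.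
      set (D := d (p1,p2) (q1,q2)) in *.
      set (eps := (m + D)/2).
      assert (He : 0 < eps /\ m < eps /\ eps < D) by (unfold eps; lra).
      clearbody eps. destruct He as [He0 [He1 He2]].
      specialize (H (fun z => z = p1 \/ z = q1) (fun z => z = p2 \/ z = q2)
        (compact2 dX p1 q1) (compact2 dY p2 q2) eps He0).
      rewrite (packing_eq dX _ eps 1) in H.
      2:{ apply packing_one with p1. left; reflexivity.
          intros a b [-> | ->] [-> | ->].
          - rewrite (proj2 (HzX _ _) eq_refl); lra.
          - lra.
          - rewrite HsX; lra.
          - rewrite (proj2 (HzX _ _) eq_refl); lra. }
      rewrite (packing_eq dY _ eps 1) in H.
      2:{ apply packing_one with p2. left; reflexivity.
          intros a b [-> | ->] [-> | ->].
          - rewrite (proj2 (HzY _ _) eq_refl); lra.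
          - lra.
          - rewrite HsY; lra.
          - rewrite (proj2 (HzY _ _) eq_refl); lra. }
      simpl in H.
      destruct (packing_exists d (setX (fun z => z = p1 \/ z = q1) (fun z => z = p2 \/ z = q2)) eps 4)
        as [n Hn].
      { intros l [Hnd [Hin _]].
        change 4%nat with (length ((p1,p2)::(p1,q2)::(q1,p2)::(q1,q2)::nil)).
        apply NoDup_incl_length; auto. intros [a b] Hab.
        destruct (Hin _ Hab) as [Ha Hb]; simpl in Ha, Hb.
        destruct Ha as [-> | ->]; destruct Hb as [-> | ->]; simpl; tauto. }
      rewrite (packing_eq _ _ _ _ Hn) in H. subst n. destruct Hn as [_ Hmax].
      destruct hd as [_ [Hz [Hs _]]].
      assert (Hpq: (p1,p2) <> (q1,q2)).
      { intro E. unfold D in He2. rewrite E in He2.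
        rewrite (proj2 (Hz _ _) eq_refl) in He2. lra. }
      specialize (Hmax ((p1,p2)::(q1,q2)::nil)). simpl in Hmax.
      enough (2 <= 1)%nat by lia.
      apply Hmax. split; [|split].
      - constructor. simpl; intros [E|[]]; auto. constructor; [simpl; tauto|constructor].
      - intros a [<-|[<-|[]]]; unfold setX; simpl; auto.
      - intros a b Ha Hb Hne2.
        destruct Ha as [<-|[<-|[]]]; destruct Hb as [<-|[<-|[]]];
          try (exfalso; now apply Hne2).
        + exact He2.
        + rewrite Hs. exact He2. }
    split; [exact hd|]. intros a b c. rewrite !Heq. apply dinf_ult; auto.
Qed.
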